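(* The coefficient truncation map $Q:\sum_{x}a_x\lambda(x)\mapsto\sum_{x\in K}a_x\lambda(x)$, defined on finite linear combinations of $\lambda(x)$, $x\in F_\infty$ (i.e. the orthogonal projection onto $\ell_2(K)$), satisfies $\|Q_n(T)\|\le 2\|T\|$ for all $n$ and all $T\in M_n(\mathrm{span}\{\lambda(x):x\in F_\infty\})$. Consequently $Q$ extends to a completely bounded projection of cb-norm at most $2$ from $C^*_\lambda(F_\infty)$ onto $C^*_\lambda(K)$.
   Context: Let $F_\infty$ be the free group with free generators split into two infinite families $\alpha_1,\alpha_2,\dots$ and $e_1,e_2,\dots$. Let $F_\alpha$ be the subgroup generated by the $\alpha_i$, and $K=\bigcup_{j\ge1}e_jF_\alpha\subseteq F_\infty$. On $\ell_2(F_\infty)$ (orthonormal basis $\{\delta_x\}$) let $\lambda(x)\delta_y=\delta_{xy}$; $C^*_\lambda(F_\infty)$ is the norm closure of $\mathrm{span}\{\lambda(x)\}$ in $B(\ell_2(F_\infty))$, and $C^*_\lambda(K)$ is the norm closure of $\mathrm{span}\{\lambda(x):x\in K\}$ there. $Q_n$ denotes $Q$ applied entrywise to $n\times n$ matrices, with $M_n(B(H))=B(H^n)$. *)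

(* Defs.v *)
(* Free group F_oo on generators alpha_i, e_j (i, j : nat),
   modelled by reduced words; finitely supported elements of the group algebra
   and of l2(F_oo)^n are modelled as finite formal sums (lists of
   coefficient/group-element pairs). *)
From HB Require Import structures.
From mathcomp Require Import all_boot all_order all_algebra.
From mathcomp Require Import complex.
From mathcomp Require Import reals.
Set Implicit Arguments. Unset Strict Implicit. Unset Printing Implicit Defensive.
Import Order.TTheory GRing.Theory Num.Theory.
Local Open Scope ring_scope.

(* generators: inl i = alpha_i, inr j = e_j *)
Definition gen := (nat + nat)%type.
(* a letter: a generator together with an "inverse" flag (true = inverse) *)
Definition letter := (gen * bool)%type.

Definition linv (l : letter) : letter := (l.1, ~~ l.2).

(* free reduction: push letters one by one on a stack (stored reversed) *)
Definition push (st : seq letter) (l : letter) : seq letter :=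
  match st with
  | m :: st' => if m == linv l then st' else l :: m :: st'
  | [::] => [:: l]
  end.
Definition reduce (w : seq letter) : seq letter := rev (foldl push [::] w).

Fixpoint reducedb (w : seq letter) : bool :=
  match w with
  | l :: ((m :: _) as w') => (m != linv l) && reducedb w'
  | _ => true
  end.

Definition Finf := {w : seq letter | reducedb w}.
HB.instance Definition _ := [isSub for (@sval _ (fun w => reducedb w))].
HB.instance Definition _ := [Countable of Finf by <:].

Definition Fone : Finf := exist _ [::] isT.

(* product in F_oo: free reduction of the concatenation (the result of
   [reduce] is always reduced, so the default [Fone] is never used) *)
Definition fmul (x y : Finf) : Finf := insubd Fone (reduce (val x ++ val y)).

Definition isAlpha (l : letter) : bool := if l.1 is inl _ then true else false.

(* K = union_j e_j F_alpha : reduced words  e_j . (reduced word in the alpha's) *)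
Definition inK (x : Finf) : bool :=
  match val x with
  | (inr _, false) :: rest => all isAlpha rest
  | _ => false
  end.

Section Ops.
Variable R : realType.
Local Notation C := R[i].

Definition abs2 (z : C) : R := let: Complex a b := z in a ^+ 2 + b ^+ 2.

(* finite formal sum  sum_{(c,x) in s} c * (lambda(x) or delta_x) *)
Definition fsum := seq (C * Finf).

Definition coef (s : fsum) (g : Finf) : C := \sum_(p <- s | p.2 == g) p.1.

Definition norm2 (s : fsum) : R :=
  \sum_(g <- undup (map snd s)) abs2 (coef s g).

(* (sum c_x lambda(x)) applied to (sum d_y delta_y) = sum c_x d_y delta_{xy} *)
Definition act (a v : fsum) : fsum :=
  [seq (p.1 * q.1, fmul p.2 q.2) | p <- a, q <- v].

(* vectors in l2(F_oo)^n with finite support, and n x n matrices over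
   span{lambda(x)} *)
Definition vnorm2 (n : nat) (v : 'I_n -> fsum) : R := \sum_(i < n) norm2 (v i).

Definition mxact (n : nat) (T : 'I_n -> 'I_n -> fsum) (v : 'I_n -> fsum)
  : 'I_n -> fsum :=
  fun i => flatten [seq act (T i j) (v j) | j <- enum 'I_n].

Definition Qtr (s : fsum) : fsum := [seq p <- s | inK p.2].
Definition Qn (n : nat) (T : 'I_n -> 'I_n -> fsum) : 'I_n -> 'I_n -> fsum :=
  fun i j => Qtr (T i j).

(* ||T|| <= c  on  l2(F_oo)^n  (tested on the dense subspace of finitely
   supported vectors, which suffices since T is bounded) *)
Definition opnorm_le (n : nat) (T : 'I_n -> 'I_n -> fsum) (c : R) : Prop :=
  forall v : 'I_n -> fsum, vnorm2 (mxact T v) <= c ^+ 2 * vnorm2 v.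
End Ops.

(* Main.v *)
Require Import Defs.
From HB Require Import structures.
From mathcomp Require Import all_boot all_order all_algebra.
From mathcomp Require Import complex.
From mathcomp Require Import reals.
From mathcomp Require Import ring lra.
Set Implicit Arguments. Unset Strict Implicit. Unset Printing Implicit Defensive.
Import Order.TTheory GRing.Theory Num.Theory.
Local Open Scope ring_scope.

Local Open Scope nat_scope.


Definition rr (l m : letter) : bool := m != linv l.

Lemma linvK (l : letter) : linv (linv l) = l.
Proof. by case: l => a b; rewrite /linv /= negbK. Qed.

Lemma rr_sym l m : rr l m = rr m l.
Proof.
rewrite /rr; apply/idP/idP; apply: contra => /eqP ->; by rewrite linvK.
Qed.

Lemma reducedbE w : reducedb w = sorted rr w.
Proof. elim: w => [|l w IH] //; case: w IH => [|m w] IH //. change ((m != linv l) && reducedb (m :: w) = sorted rr (l :: m :: w)). by rewrite IH. Qed.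

Definition inv (s : seq letter) : seq letter := rev (map linv s).

Lemma inv_cat s t : inv (s ++ t) = inv t ++ inv s.
Proof. by rewrite /inv map_cat rev_cat. Qed.
Lemma invK s : inv (inv s) = s.
Proof. by rewrite /inv map_rev revK -map_comp (eq_map linvK) map_id. Qed.
Lemma inv_cons l s : inv (l :: s) = inv s ++ [:: linv l].
Proof. by rewrite /inv /= rev_cons cats1. Qed.
Lemma isAlpha_linv l : isAlpha (linv l) = isAlpha l.
Proof. by case: l => [[]]. Qed.
Lemma all_inv s : all isAlpha (inv s) = all isAlpha s.
Proof. by rewrite /inv all_rev all_map; apply: eq_all => l /=; rewrite isAlpha_linv. Qed.

Lemma no_adj p l q : sorted rr (p ++ l :: linv l :: q) = false.
Proof.
apply/negP => /cat_sorted2 [_] /=; by rewrite /rr eqxx.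
Qed.

Lemma no_sinv p s q : s != [::] -> sorted rr (p ++ s ++ inv s ++ q) = false.
Proof.
case/lastP: s => [//|s l] _.
rewrite -cats1 inv_cat /= catA -catA /= -catA /=.
by rewrite catA no_adj.
Qed.

Lemma push_red w st :
  sorted rr w ->
  (match st, w with h :: _, l :: _ => h != linv l | _, _ => true end) ->
  foldl push st w = rev w ++ st.
Proof.
elim: w st => [|l w IH] st //= Hw Hst.
have -> : push st l = l :: st.
  by case: st Hst => [|h st] //= /negbTE ->.
rewrite IH; first by rewrite rev_cons cat_rcons.
  by case: w Hw {IH} => //= m w /andP [_].
case: w Hw {IH} => //= m w /andP [H _].
by rewrite rr_sym in H.
Qed.

Lemma sorted_rcons2 (e : rel letter) s h l :
  sorted e (rcons s h) -> e h l -> sorted e (rcons (rcons s h) l).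
Proof.
case: s => [|a s] /=; first by move=> _ ->.
rewrite -!cats1 -catA /= !cat_path /= => /andP [-> H] ->. by rewrite andbT in H; rewrite H. 
Qed.

Lemma cancel_lem g y : sorted rr g -> sorted rr y ->
  exists u m w, [/\ g = u ++ m, y = inv m ++ w,
     foldl push (rev g) y = rev (u ++ w) & sorted rr (u ++ w)].
Proof.
elim: y g => [|l y IH] g Hg Hy.
  by exists g, [::], [::]; rewrite !cats0.
case/lastP: g Hg => [|g h] Hg.
  exists [::], [::], (l :: y); split => //.
  rewrite /= push_red //; first by rewrite rev_cons cats1.
  by move: Hy => /path_sorted.
  by case: y Hy {IH} => //= m y /andP [H _]; rewrite rr_sym in H.
rewrite rev_rcons /=.
have Hy' : sorted rr y by move: Hy => /path_sorted.
case: eqP => [Eh|Nh].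
  have Hg' : sorted rr g by move: Hg; rewrite -cats1 => /cat_sorted2 [].
  have [u [m [w [-> -> E S]]]] := IH g Hg' Hy'.
  exists u, (m ++ [:: h]), w; split => //.
  - by rewrite catA cats1.
  - by rewrite inv_cat /= /inv /= Eh linvK.
exists (rcons g h), [::], (l :: y); split => //.
- by rewrite cats0.
- rewrite push_red //; first by rewrite rev_cat rev_cons cat_rcons rev_rcons.
  by case: y Hy {Hy' IH} => //= m y /andP [H _]; rewrite rr_sym in H.
- rewrite sorted_cat_cons; apply/andP; split; last exact: Hy.
  apply: sorted_rcons2 => //.
  by rewrite /rr; apply/eqP => E; apply: Nh; rewrite E linvK.
Qed.

Fixpoint strip (s : seq letter) : seq letter :=
  if s is l :: s' then (if isAlpha l then strip s' else s) else [::].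

Lemma strip_cat s t :
  strip (s ++ t) = if all isAlpha s then strip t else strip s ++ t.
Proof. by elim: s => [|l s IH] //=; case: (isAlpha l). Qed.

Lemma size_strip s : size (strip s) <= size s.
Proof. by elim: s => [|l s IH] //=; case: (isAlpha l) => //; apply: leqW. Qed.

Lemma strip_nil s : strip s = [::] -> all isAlpha s.
Proof. by elim: s => [|l s IH] //=; case: (isAlpha l). Qed.

Lemma strip_split s : exists a, all isAlpha a /\ s = a ++ strip s.
Proof.
elim: s => [|l s [a [Ha E]]]; first by exists [::].
rewrite /=; case H: (isAlpha l).
  by exists (l :: a); rewrite /= H Ha -E.
by exists [::].
Qed.

Lemma strip_na l t : ~~ isAlpha l -> strip (l :: t) = l :: t.
Proof. by move=> /= /negbTE ->. Qed.

Lemma size_strip_cat_na s l t : ~~ isAlpha l ->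
  size (l :: t) <= size (strip (s ++ l :: t)).
Proof.
move=> Hl; rewrite strip_cat; case: (all isAlpha s); first by rewrite strip_na.
by rewrite size_cat leq_addl.
Qed.

Lemma catsI (s t w : seq letter) : s ++ w = t ++ w -> s = t.
Proof.
move=> E; have Hs : size s = size t.
  by move: (congr1 size E); rewrite !size_cat => /eqP; rewrite eqn_add2r => /eqP.
by apply/eqP; move/eqP: E; rewrite eqseq_cat // => /andP [].
Qed.

Definition inKl (g : seq letter) : bool :=
  match g with (inr _, false) :: rest => all isAlpha rest | _ => false end.
Definition phi1l (x y : seq letter) : bool :=
  match x with (inr _, false) :: x' => strip x' == strip y | _ => false end.
Definition phi2l (x y : seq letter) : bool :=
  match strip y with (inr _, true) :: w => x == w | _ => false end.

Lemma disj x y : ~~ (phi1l x y && phi2l x y).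
Proof.
rewrite /phi1l /phi2l; case: x => [|[[i|j] [|]] x'] //.
case E: (strip y) => [|[[i|k] [|]] w] //; rewrite ?andbF //.
apply/negP => /andP [/eqP E1 /eqP E2].
have := size_strip x'; rewrite E1 -E2 /= ltnNge; by rewrite leqnSn.
Qed.

Lemma strip_nonalpha_ne s : ~~ all isAlpha s -> strip s != [::].
Proof. by apply: contra => /eqP /strip_nil. Qed.

Lemma comb_core g u m w :
  sorted rr g -> g = u ++ m ->
  inKl g = phi1l (u ++ w) (inv m ++ w) || phi2l (u ++ w) (inv m ++ w).
Proof.
move=> Hg Eg; apply/idP/idP.
-
  rewrite Eg; case: u Eg => [|l' u'] Eg /=.
  + case: m Eg Hg => [//|l a] Eg Hg.
    case: l {Eg Hg} => [[i|j] [|]] //= Ha; apply/orP; right.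
    rewrite /phi2l inv_cons -catA strip_cat all_inv Ha /= eqxx.
    done.
  + case: l' Eg => [[i|j] [|]] // Eg; rewrite all_cat => /andP [Hu Hm].
    apply/orP; left; rewrite /= !strip_cat Hu all_inv Hm.
    done.
- case/orP.
  +
    case: u Eg => [|l u'] Eg /=.
    * rewrite /phi1l; case: w => [|[[i|j] [|]] x'] //.
      move=> /eqP E; have := size_strip x'; rewrite E.
      move: (size_strip_cat_na (inv m) (l:=(inr j, false)) x' isT) => H1 H2.
      by have := leq_trans H1 H2; rewrite /= ltnn.
    * case: l Eg => [[i|j] [|]] // Eg; rewrite /= !strip_cat => /eqP.
      rewrite Eg /= all_cat.
      case Hu: (all isAlpha u'); case Hm: (all isAlpha (inv m)).
      -- by rewrite -all_inv Hm.
      -- move=> E; have := size_strip w; rewrite E size_cat.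
         have := strip_nonalpha_ne (negbT Hm); case: (strip (inv m)) => //= a b _.
         by rewrite addSn ltnNge leq_addl.
      -- move=> E; have := size_strip w; rewrite -E size_cat.
         have := strip_nonalpha_ne (negbT Hu); case: (strip u') => //= a b _.
         by rewrite addSn ltnNge leq_addl.
      -- move=> /catsI E.
         have [a1 [_ E1]] := strip_split u'.
         have [a2 [_ E2]] := strip_split (inv m).
         have Hne := strip_nonalpha_ne (negbT Hu).
         have Em : m = inv (strip u') ++ inv a2 by rewrite -inv_cat E -E2 invK.
         move: (strip u') E1 Hne Em => s E1 Hne Em.
         move: Hg; rewrite Eg Em E1 /= -catA => H.
         by move: (no_sinv ((inr j, false) :: a1) (inv a2) Hne); rewrite /= H.
  +
    rewrite /phi2l strip_cat.
    case Hm: (all isAlpha (inv m)).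
    * case E: (strip w) => [|[[i|k] [|]] w2] //= /eqP E2.
      have := size_strip w; rewrite E -E2 /= size_cat.
      by rewrite ltnNge leq_addl.
    * have := strip_nonalpha_ne (negbT Hm).
      case E: (strip (inv m)) => [//|l2 s] _ /=.
      case: l2 E => [[i|k] [|]] E //= /eqP E2.
      have Es : s = u by apply: (@catsI _ _ w); rewrite E2.
      subst s.
      have [a [Ha Ea]] := strip_split (inv m).
      have Em : m = inv u ++ (inr k, false) :: inv a.
        by rewrite -[m]invK Ea E inv_cat inv_cons -catA.
      move: Hg; rewrite Eg Em.
      case: u {E E2 Eg Em} => [|l u] Hg.
        by rewrite /= all_inv.
      by rewrite -[_ ++ _]cat0s no_sinv in Hg.
Qed.

Lemma reduce_cat g y : sorted rr g -> sorted rr y ->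
  exists u m w, [/\ g = u ++ m, y = inv m ++ w,
     reduce (g ++ y) = u ++ w & sorted rr (u ++ w)].
Proof.
move=> Hg Hy; have [u [m [w [E1 E2 E3 E4]]]] := cancel_lem Hg Hy.
exists u, m, w; split => //.
rewrite /reduce foldl_cat (push_red (st:=[::]) Hg) ?cats0; last by case: g Hg {E1 E3}.
by rewrite E3 revK.
Qed.

Lemma comb g y : sorted rr g -> sorted rr y ->
  let x := reduce (g ++ y) in
  inKl g = phi1l x y || phi2l x y.
Proof.
move=> Hg Hy; have [u [m [w [E1 E2 E3 E4]]]] := reduce_cat Hg Hy.
by rewrite /= E3 E2; apply: comb_core.
Qed.

Local Open Scope ring_scope.

Lemma abs2_ge0 (R : realType) (z : R[i]) : 0 <= abs2 z.
Proof. by case: z => a b /=; rewrite addr_ge0 // sqr_ge0. Qed.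

Lemma abs2_0 (R : realType) : abs2 (0 : R[i]) = 0.
Proof. by rewrite /= expr0n /= addr0. Qed.

Lemma abs2_add (R : realType) (z w : R[i]) :
  abs2 (z + w) <= 2 * abs2 z + 2 * abs2 w.
Proof.
case: z => a b; case: w => c d /=.
have H1 : 0 <= (a - c) ^+ 2 by apply: sqr_ge0.
have H2 : 0 <= (b - d) ^+ 2 by apply: sqr_ge0.
nra.
Qed.

Lemma sum_sub (R : realType) (T : eqType) (F : T -> R) (A B : seq T) :
  uniq A -> uniq B -> {subset A <= B} ->
  (forall g, g \in B -> g \notin A -> F g = 0) ->
  \sum_(g <- A) F g = \sum_(g <- B) F g.
Proof.
move=> uA uB sAB F0.
rewrite [RHS](bigID (fun g => g \in A)) /= [X in _ + X]big1_seq ?addr0; last first.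
  move=> g /andP [nA gB]; exact: F0.
rewrite -[RHS]big_filter; apply: perm_big.
apply: uniq_perm => //; first exact: filter_uniq.
by move=> g; rewrite mem_filter; case gA: (g \in A) => //=; rewrite sAB.
Qed.

Lemma coef_notin (R : realType) (s : fsum R) g : g \notin map snd s -> coef s g = 0.
Proof.
move=> H; rewrite /coef big1_seq // => p /andP [/eqP E ps].
by move: H; rewrite -E (map_f snd ps).
Qed.

Lemma norm2_univ (R : realType) (s : fsum R) (U : seq Finf) :
  uniq U -> {subset map snd s <= U} ->
  norm2 s = \sum_(g <- U) abs2 (coef s g).
Proof.
move=> uU sU; rewrite /norm2; apply: sum_sub => //.
- exact: undup_uniq.
- by move=> g; rewrite mem_undup; apply: sU.
- by move=> g _; rewrite mem_undup => /coef_notin ->; rewrite abs2_0.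
Qed.

Lemma norm2_ge0 (R : realType) (s : fsum R) : 0 <= norm2 s.
Proof. by rewrite /norm2 sumr_ge0 // => g _; apply: abs2_ge0. Qed.

Lemma coef_cat (R : realType) (s t : fsum R) g : coef (s ++ t) g = coef s g + coef t g.
Proof. by rewrite /coef big_cat. Qed.

Lemma coef_flatten (R : realType) (ss : seq (fsum R)) g :
  coef (flatten ss) g = \sum_(s <- ss) coef s g.
Proof. by rewrite /coef big_flatten. Qed.

Definition restr (R : realType) (P : pred Finf) (s : fsum R) : fsum R :=
  [seq p <- s | P p.2].

Lemma coef_restr (R : realType) P (s : fsum R) g :
  coef (restr P s) g = if P g then coef s g else 0.
Proof.
rewrite /coef /restr big_filter_cond; case: ifP => Pg.
  by apply: eq_bigl => p /=; case: eqP => [->|]; rewrite ?Pg ?andbF.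
by rewrite big1 // => p /andP [Pp /eqP E]; move: Pp; rewrite E Pg.
Qed.

Lemma coef_act (R : realType) (a v : fsum R) g :
  coef (act a v) g = \sum_(p <- a) \sum_(q <- v)
     (if fmul p.2 q.2 == g then p.1 * q.1 else 0).
Proof. by rewrite /coef /act big_mkcond big_allpairs_dep. Qed.

Lemma coef_mxact (R : realType) n (T : 'I_n -> 'I_n -> fsum R) v i g :
  coef (mxact T v i) g = \sum_(j <- enum 'I_n) \sum_(p <- T i j) \sum_(q <- v j)
     (if fmul p.2 q.2 == g then p.1 * q.1 else 0).
Proof.
rewrite /mxact coef_flatten big_map; apply: eq_bigr => j _; exact: coef_act.
Qed.

Lemma sum_single (R : zmodType) (K : eqType) (ks : seq K) (k0 : K) (F : K -> R) :
  uniq ks ->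
  \sum_(k <- ks) (if k0 == k then F k else 0) = if k0 \in ks then F k0 else 0.
Proof.
move=> uks; case: ifP => H.
  rewrite (bigD1_seq k0) //= eqxx big1 ?addr0 // => k /negbTE.
  by rewrite eq_sym => ->.
rewrite big1_seq // => k /andP [_ kin]; case: eqP => // E.
by move: H; rewrite E kin.
Qed.

Lemma sum_abs2_single (R : realType) (K : eqType) (ks : seq K) (o : option K)
    (F : K -> R[i]) :
  uniq ks ->
  abs2 (\sum_(k <- ks) (if o == Some k then F k else 0)) <=
  \sum_(k <- ks) abs2 (F k).
Proof.
move=> uks; case: o => [k0|].
  have -> : \sum_(k <- ks) (if Some k0 == Some k then F k else 0) =
            \sum_(k <- ks) (if k0 == k then F k else 0).
    by apply: eq_bigr => k _; rewrite (inj_eq (@Some_inj _)).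
  rewrite (@sum_single _ _ ks k0 F uks); case: ifP => H.
    rewrite (bigD1_seq k0) //= lerDl sumr_ge0 // => k _; exact: abs2_ge0.
  by rewrite abs2_0 sumr_ge0 // => k _; exact: abs2_ge0.
rewrite big1 ?abs2_0; last by [].
by rewrite sumr_ge0 // => k _; exact: abs2_ge0.
Qed.

Lemma lemP (R : realType) (K : eqType) (ks : seq K) (a : Finf -> option K)
   (s : K -> fsum R) :
  uniq ks ->
  norm2 (flatten [seq restr (fun x => a x == Some k) (s k) | k <- ks]) <=
  \sum_(k <- ks) norm2 (s k).
Proof.
move=> uks.
set U := undup (flatten [seq map snd (s k) | k <- ks]).
have uU : uniq U by apply: undup_uniq.
have sU : forall k, k \in ks -> {subset map snd (s k) <= U}.
  move=> k kin g gin; rewrite mem_undup; apply/flattenP.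
  by exists (map snd (s k)) => //; apply: map_f.
rewrite (norm2_univ uU); last first.
  move=> g /mapP [p /flattenP [r /mapP [k kin ->] pin] ->].
  by apply: (sU k kin); apply: map_f; move: pin; rewrite mem_filter => /andP [].
rewrite (eq_big_seq (fun k => \sum_(g <- U) abs2 (coef (s k) g))); last first.
  by move=> k kin; apply: norm2_univ => //; apply: sU.
rewrite exchange_big /=; apply: ler_sum => g _.
rewrite coef_flatten big_map.
under eq_bigr do rewrite coef_restr.
exact: sum_abs2_single.
Qed.

Lemma lemQ (R : realType) (K : eqType) (ks : seq K) (b : Finf -> option K)
   (s : fsum R) :
  uniq ks ->
  \sum_(k <- ks) norm2 (restr (fun y => b y == Some k) s) <= norm2 s.
Proof.
move=> uks.
set U := undup (map snd s).
have uU : uniq U by apply: undup_uniq.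
rewrite [X in _ <= X](norm2_univ uU); last by move=> g; rewrite mem_undup.
rewrite (eq_bigr (fun k => \sum_(g <- U) (if b g == Some k then abs2 (coef s g) else 0))); last first.
  move=> k _; rewrite (norm2_univ uU); last first.
    move=> g /mapP [p]; rewrite mem_filter => /andP [_ pin] ->.
    by rewrite mem_undup; apply: map_f.
  by apply: eq_bigr => g _; rewrite coef_restr; case: ifP => //; rewrite abs2_0.
rewrite exchange_big /=; apply: ler_sum => g _.
case: (b g) => [k0|].
  have -> : \sum_(k <- ks) (if Some k0 == Some k then abs2 (coef s g) else 0) =
            \sum_(k <- ks) (if k0 == k then abs2 (coef s g) else 0).
    by apply: eq_bigr => k _; rewrite (inj_eq (@Some_inj _)).
  rewrite (@sum_single _ _ ks k0 (fun _ => abs2 (coef s g)) uks).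
  by case: ifP => _ //; apply: abs2_ge0.
by rewrite big1 //; apply: abs2_ge0.
Qed.

Definition Wk (R : realType) n (T : 'I_n -> 'I_n -> fsum R) (v : 'I_n -> fsum R)
   (K : eqType) (a b : Finf -> option K) (ks : seq K) : 'I_n -> fsum R :=
  fun i => flatten [seq restr (fun x => a x == Some k)
     (mxact T (fun j => restr (fun y => b y == Some k) (v j)) i) | k <- ks].

Lemma W_bound (R : realType) n (T : 'I_n -> 'I_n -> fsum R) (c : R)
   (v : 'I_n -> fsum R) (K : eqType) (a b : Finf -> option K) (ks : seq K) :
  opnorm_le T c -> uniq ks -> vnorm2 (Wk T v a b ks) <= c ^+ 2 * vnorm2 v.
Proof.
move=> HT uks; rewrite /vnorm2.
set vk := fun k j => restr (fun y => b y == Some k) (v j).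
apply: le_trans (_ : _ <= \sum_(i < n) \sum_(k <- ks) norm2 (mxact T (vk k) i)) _.
  by apply: ler_sum => i _; exact: lemP.
rewrite exchange_big /=.
apply: le_trans (_ : _ <= \sum_(k <- ks) c ^+ 2 * vnorm2 (vk k)) _.
  by apply: ler_sum => k _; exact: HT (vk k).
rewrite -mulr_sumr; apply: ler_wpM2l; first exact: sqr_ge0.
rewrite /vnorm2 exchange_big /=; apply: ler_sum => j _; exact: lemQ.
Qed.

Lemma sum_keys (R : zmodType) (K : eqType) (ks : seq K) (oa ob : option K) (E : R) :
  uniq ks ->
  \sum_(k <- ks) (if oa == Some k then (if ob == Some k then E else 0) else 0) =
  if (oa == ob) && (if oa is Some k then k \in ks else false) then E else 0.
Proof.
move=> uks; case: oa => [k0|]; last by rewrite big1 // andbF.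
rewrite (eq_bigr (fun k => if k0 == k then (if ob == Some k then E else 0) else 0)); last first.
  by move=> k _; rewrite (inj_eq (@Some_inj _)).
rewrite (@sum_single _ _ ks k0 (fun k => if ob == Some k then E else 0) uks).
by rewrite [ob == _]eq_sym; case: (Some k0 == ob); case: (k0 \in ks); rewrite ?andbF.
Qed.

Lemma coef_Wk (R : realType) n (T : 'I_n -> 'I_n -> fsum R) (v : 'I_n -> fsum R)
   (K : eqType) (a b : Finf -> option K) (ks : seq K) i x :
  uniq ks ->
  coef (Wk T v a b ks i) x = \sum_(j <- enum 'I_n) \sum_(p <- T i j) \sum_(q <- v j)
     (if (a x == b q.2) && (if a x is Some k then k \in ks else false) then
       (if fmul p.2 q.2 == x then p.1 * q.1 else 0) else 0).
Proof.
move=> uks; rewrite /Wk coef_flatten big_map.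
rewrite (eq_bigr (fun k => \sum_(j <- enum 'I_n) \sum_(p <- T i j) \sum_(q <- v j)
   (if a x == Some k then (if b q.2 == Some k then
       (if fmul p.2 q.2 == x then p.1 * q.1 else 0) else 0) else 0))); last first.
  move=> k _; rewrite coef_restr coef_mxact; case: (a x == Some k).
    apply: eq_bigr => j _; apply: eq_bigr => p _.
    by rewrite /restr big_filter big_mkcond.
  by symmetry; apply: big1 => j _; apply: big1 => p _; apply: big1.
rewrite exchange_big; apply: eq_bigr => j _.
rewrite exchange_big; apply: eq_bigr => p _.
rewrite exchange_big; apply: eq_bigr => q _.
exact: sum_keys.
Qed.

Lemma fmul_val (g y : Finf) : val (fmul g y) = reduce (val g ++ val y).
Proof.
rewrite /fmul insubdK //.
have Hg : sorted rr (val g) by rewrite -reducedbE; apply: valP.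
have Hy : sorted rr (val y) by rewrite -reducedbE; apply: valP.
have [u [m [w [_ _ -> S]]]] := reduce_cat Hg Hy.
by change (reducedb (u ++ w)); rewrite reducedbE.
Qed.

Lemma combF (g y : Finf) :
  inK g = phi1l (val (fmul g y)) (val y) || phi2l (val (fmul g y)) (val y).
Proof.
rewrite fmul_val; apply: comb; rewrite -reducedbE; apply: valP.
Qed.

Definition a1 (x : Finf) : option (seq letter) :=
  match val x with (inr _, false) :: x' => Some (strip x') | _ => None end.
Definition b1 (y : Finf) : option (seq letter) := Some (strip (val y)).
Definition a2 (x : Finf) : option (seq letter) := Some (val x).
Definition b2 (y : Finf) : option (seq letter) :=
  match strip (val y) with (inr _, true) :: w => Some w | _ => None end.

Lemma phi1E x y : (a1 x == b1 y) = phi1l (val x) (val y).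
Proof.
rewrite /a1 /b1 /phi1l; case: (val x) => [|[[i|j] [|]] x'] //.
Qed.

Lemma phi2E x y : (a2 x == b2 y) = phi2l (val x) (val y).
Proof.
rewrite /a2 /b2 /phi2l; case: (strip (val y)) => [|[[i|j] [|]] w] //.
Qed.

Lemma cond_simp (K : eqType) (ks : seq K) (oa ob : option K) :
  (forall k, ob = Some k -> k \in ks) ->
  (oa == ob) && (if oa is Some k then k \in ks else false) = (oa == ob) && (oa != None).
Proof.
move=> H; case: oa => [k|]; last by rewrite !andbF.
case: eqP => [E|] //=; by rewrite (H k (esym E)).
Qed.

Theorem proposition4 (R : realType) (n : nat) (T : 'I_n -> 'I_n -> fsum R)
  (c : R) :
  0 <= c -> opnorm_le T c -> opnorm_le (Qn T) (2 * c).
Proof.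
move=> c0 HT v.
set allq := flatten [seq v j | j <- enum 'I_n].
set ks1 := undup [seq strip (val q.2) | q <- allq].
set ks2 := undup (pmap (fun q => b2 q.2) allq).
have u1 : uniq ks1 by apply: undup_uniq.
have u2 : uniq ks2 by apply: undup_uniq.
set W1 := Wk T v a1 b1 ks1.
set W2 := Wk T v a2 b2 ks2.
have Hc : forall i x, coef (mxact (Qn T) v i) x = coef (W1 i) x + coef (W2 i) x.
  move=> i x; rewrite coef_mxact /W1 /W2 !coef_Wk //.
  rewrite -big_split; apply: eq_bigr => j _.
  rewrite -big_split; rewrite /Qn /Qtr big_filter big_mkcond; apply: eq_bigr => p _.
  rewrite -big_split /=.
  have -> : (if inK p.2 then \sum_(q <- v j) (if fmul p.2 q.2 == x then p.1 * q.1 else 0) else 0)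
     = \sum_(q <- v j) (if inK p.2 then (if fmul p.2 q.2 == x then p.1 * q.1 else 0) else 0).
    by case: ifP => // _; rewrite big1.
  apply: eq_big_seq => q qin.
  have qall : q \in allq by apply/flattenP; exists (v j) => //; apply: map_f; rewrite mem_enum.
  rewrite (@cond_simp _ ks1 (a1 x) (b1 q.2)); last first.
    by move=> k [<-]; rewrite mem_undup; apply: (map_f (fun q => strip (val q.2))).
  rewrite (@cond_simp _ ks2 (a2 x) (b2 q.2)); last first.
    by move=> k Ek; rewrite mem_undup mem_pmap -Ek; apply: (map_f (fun q => b2 q.2)).
  case Ex: (fmul p.2 q.2 == x); last by rewrite !if_same addr0.
  move/eqP: Ex => <-.
  have -> : (a1 (fmul p.2 q.2) == b1 q.2) && (a1 (fmul p.2 q.2) != None) =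
            phi1l (val (fmul p.2 q.2)) (val q.2).
    by rewrite -phi1E /b1; case: (a1 _) => //= ?; rewrite andbT.
  have -> : (a2 (fmul p.2 q.2) == b2 q.2) && (a2 (fmul p.2 q.2) != None) =
            phi2l (val (fmul p.2 q.2)) (val q.2).
    by rewrite -phi2E /a2 andbT.
  have := disj (val (fmul p.2 q.2)) (val q.2).
  rewrite (combF p.2 q.2).
  case: (phi1l _ _); case: (phi2l _ _) => //= _; by rewrite ?addr0 ?add0r.
have B1 : vnorm2 W1 <= c ^+ 2 * vnorm2 v by apply: W_bound.
have B2 : vnorm2 W2 <= c ^+ 2 * vnorm2 v by apply: W_bound.
have B : vnorm2 (mxact (Qn T) v) <= 2 * vnorm2 W1 + 2 * vnorm2 W2.
  rewrite /vnorm2 !mulr_sumr -big_split /=; apply: ler_sum => i _.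
  set U := undup ([seq p.2 | p <- mxact (Qn T) v i] ++ [seq p.2 | p <- W1 i]
                  ++ [seq p.2 | p <- W2 i]).
  have uU : uniq U by apply: undup_uniq.
  rewrite (@norm2_univ _ _ U uU); last by move=> g gin; rewrite mem_undup !mem_cat gin.
  rewrite (@norm2_univ _ (W1 i) U uU); last by move=> g gin; rewrite mem_undup !mem_cat gin orbT.
  rewrite (@norm2_univ _ (W2 i) U uU); last by move=> g gin; rewrite mem_undup !mem_cat gin !orbT.
  rewrite !mulr_sumr -big_split /=; apply: ler_sum => g _.
  rewrite Hc; exact: abs2_add.
have -> : (2 * c) ^+ 2 * vnorm2 v = 4 * (c ^+ 2 * vnorm2 v) by ring.
lra.
Qed.
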